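(* The map $\mathcal J:\mathcal X_\Lambda\to\mathcal X_J$, $\mathcal J(f)(\theta)=f(\theta)/\theta$ for $\theta\ne0$ and $\mathcal J(f)(0)=\liminf_{\theta\to0}f(\theta)$, is continuous when both spaces carry $\tau_{AW}$.
   Context: For a probability measure $\nu$ let $f_\nu(\theta)=\int e^{\theta x}\nu(dx)\in(0,\infty]$. For $f:\mathbb R\to[-\infty,\infty]$, $\mathrm{epi}(f)=\{(\theta,b):b\ge f(\theta)\}$. On $\mathbb R^2$ use the box metric $d(x,y)=\max(|x_1-y_1|,|x_2-y_2|)$, $d(x,A)=\inf_{y\in A}d(x,y)$, $\overline B_k=\{x:d(0,x)\le k\}$. The Attouch–Wets topology $\tau_{AW}$ has local base at $f$ given by $V_k(f)=\{g:\sup_{x\in\overline B_k}|d(x,\mathrm{epi}(g))-d(x,\mathrm{epi}(f))|<1/k\}$. $\mathcal X_M$ = lower semicontinuous convex $f:\mathbb R\to(0,\infty]$ with $f(0)<\infty$ for which some probability $\nu$ satisfies $f(\theta)=f_\nu(\theta)$ whenever $f(\theta)<\infty$; $\mathcal X_\Lambda=\{\log g:g\in\mathcal X_M\}$ (with $\log\infty=\infty$); $\mathcal X_J$ = functions $f:\mathbb R\to[-\infty,\infty]$ with $f(\theta)=g(\theta)/\theta$ for $\theta\ne0$ and $f(0)=\liminf_{\theta\to0}f(\theta)$ for some $g\in\mathcal X_\Lambda$; for $f\in\mathcal X_J$, $\mathrm{epi}(f)$ denotes the closure in $\mathbb R^2$ of its epigraph (equivalently the epigraph of its lower semicontinuous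 regularisation), which is used to define $\tau_{AW}$ on $\mathcal X_J$. *)

(* Defs.v *)
From Stdlib Require Import Reals Lra List Classical ClassicalEpsilon.
Open Scope R_scope.

Inductive Rbar : Type := Fin (r : R) | PInf | MInf.

Definition Rbar_le (x y : Rbar) : Prop :=
  match x, y with
  | MInf, _ => True
  | _, PInf => True
  | Fin a, Fin b => a <= b
  | _, _ => False
  end.

Definition Rbar_lt (x y : Rbar) : Prop := Rbar_le x y /\ x <> y.

Definition Rbar_is_lub (E : Rbar -> Prop) (l : Rbar) : Prop :=
  (forall x, E x -> Rbar_le x l) /\
  (forall u, (forall x, E x -> Rbar_le x u) -> Rbar_le l u).

Definition Rbar_is_glb (E : Rbar -> Prop) (l : Rbar) : Prop :=
  (forall x, E x -> Rbar_le l x) /\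
  (forall u, (forall x, E x -> Rbar_le u x) -> Rbar_le u l).

(** supremum / infimum in [-oo,+oo] (they always exist; chosen by epsilon) *)
Definition Rbar_sup (E : Rbar -> Prop) : Rbar :=
  epsilon (inhabits MInf) (Rbar_is_lub E).
Definition Rbar_inf (E : Rbar -> Prop) : Rbar :=
  epsilon (inhabits PInf) (Rbar_is_glb E).

Definition Rbar_log (x : Rbar) : Rbar :=
  match x with Fin r => Fin (ln r) | PInf => PInf | MInf => MInf end.

Definition Rbar_div (x : Rbar) (t : R) : Rbar :=
  match x with
  | Fin r => Fin (r / t)
  | PInf => if Rlt_dec 0 t then PInf else MInf
  | MInf => if Rlt_dec 0 t then MInf else PInf
  end.

Inductive borel : (R -> Prop) -> Prop :=
| borel_open : forall U, open_set U -> borel U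
| borel_compl : forall A, borel A -> borel (fun x => ~ A x)
| borel_union : forall A : nat -> R -> Prop,
    (forall n, borel (A n)) -> borel (fun x => exists n, A n x).

Definition is_prob_measure (mu : (R -> Prop) -> R) : Prop :=
  (forall A, borel A -> 0 <= mu A) /\
  mu (fun _ => True) = 1 /\
  (forall A : nat -> R -> Prop,
     (forall n, borel (A n)) ->
     (forall n m x, n <> m -> A n x -> A m x -> False) ->
     infinite_sum (fun n => mu (A n)) (mu (fun x => exists n, A n x))).

(** nonnegative simple function sum_i c_i 1_{A_i} (A_i disjoint Borel) below g *)
Definition simple_below (mu : (R -> Prop) -> R) (g : R -> R)
  (l : list (R * (R -> Prop))) : Prop :=
  (forall i, (i < length l)%nat ->
     0 <= fst (nth i l (0, fun _ => False)) /\
     borel (snd (nth i l (0, fun _ => False))) /\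
     (forall x, snd (nth i l (0, fun _ => False)) x ->
        fst (nth i l (0, fun _ => False)) <= g x)) /\
  (forall i j x, (i < length l)%nat -> (j < length l)%nat -> i <> j ->
     snd (nth i l (0, fun _ => False)) x ->
     snd (nth j l (0, fun _ => False)) x -> False).

Definition simple_integral (mu : (R -> Prop) -> R) (l : list (R * (R -> Prop))) : R :=
  fold_right (fun p acc => fst p * mu (snd p) + acc) 0 l.

Definition integral_nonneg (mu : (R -> Prop) -> R) (g : R -> R) : Rbar :=
  Rbar_sup (fun v => exists l, simple_below mu g l /\ v = Fin (simple_integral mu l)).

Definition mgf (nu : (R -> Prop) -> R) (theta : R) : Rbar :=
  integral_nonneg nu (fun x => exp (theta * x)).

Definition X_M (f : R -> Rbar) : Prop :=
  (forall t, (exists r, f t = Fin r /\ 0 < r) \/ f t = PInf) /\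
  f 0 <> PInf /\
  (forall t c, Rbar_lt (Fin c) (f t) ->
     exists d, 0 < d /\ forall t', Rabs (t' - t) < d -> Rbar_lt (Fin c) (f t')) /\
  (forall x y s a b, 0 <= s <= 1 -> f x = Fin a -> f y = Fin b ->
     Rbar_le (f (s * x + (1 - s) * y)) (Fin (s * a + (1 - s) * b))) /\
  (exists nu, is_prob_measure nu /\ forall t, f t <> PInf -> f t = mgf nu t).

Definition X_Lambda (f : R -> Rbar) : Prop :=
  exists g, X_M g /\ forall t, f t = Rbar_log (g t).

Definition liminf0 (h : R -> Rbar) : Rbar :=
  Rbar_sup (fun s => exists d, 0 < d /\
     s = Rbar_inf (fun v => exists t, t <> 0 /\ Rabs t < d /\ v = h t)).

Definition Jmap (f : R -> Rbar) (t : R) : Rbar :=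
  if Req_EM_T t 0 then liminf0 (fun u => Rbar_div (f u) u)
  else Rbar_div (f t) t.

Definition X_J (h : R -> Rbar) : Prop :=
  exists g, X_Lambda g /\ forall t, h t = Jmap g t.

Definition boxd (x y : R * R) : R :=
  Rmax (Rabs (fst x - fst y)) (Rabs (snd x - snd y)).

Definition epi (f : R -> Rbar) (p : R * R) : Prop := Rbar_le (f (fst p)) (Fin (snd p)).

Definition closure2 (A : R * R -> Prop) (p : R * R) : Prop :=
  forall e, 0 < e -> exists q, A q /\ boxd p q < e.

Definition dist_set (x : R * R) (A : R * R -> Prop) : Rbar :=
  Rbar_inf (fun v => exists y, A y /\ v = Fin (boxd x y)).

(** [inV k A B]: the function with (closed) epigraph B lies in V_k of the
    function with epigraph A, i.e.
    sup_{x in closed box of radius k} |d(x,B) - d(x,A)| < 1/k. *)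
Definition inV (k : nat) (A B : R * R -> Prop) : Prop :=
  exists c, c < / INR k /\
    forall x, boxd (0, 0) x <= INR k ->
      exists d1 d2, dist_set x B = Fin d1 /\ dist_set x A = Fin d2 /\
                    Rabs (d1 - d2) <= c.

(* Main.v *)
Require Import Defs.
From Stdlib Require Import Reals Lra Lia List Classical ClassicalEpsilon FunctionalExtensionality PropExtensionality.
Open Scope R_scope.

Lemma Rbar_le_refl x : Rbar_le x x.
Proof. destruct x; simpl; auto; lra. Qed.

Lemma Rbar_le_trans x y z : Rbar_le x y -> Rbar_le y z -> Rbar_le x z.
Proof. destruct x, y, z; simpl; auto; try lra; tauto. Qed.

Lemma Rbar_le_antisym x y : Rbar_le x y -> Rbar_le y x -> x = y.
Proof. destruct x, y; simpl; try tauto. intros; f_equal; lra. Qed.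

Lemma Rbar_le_total x y : Rbar_le x y \/ Rbar_le y x.
Proof. destruct x, y; simpl; auto. destruct (Rle_dec r r0); [left|right]; lra. Qed.

Lemma glb_exists (E : Rbar -> Prop) : exists l, Rbar_is_glb E l.
Proof.
  destruct (classic (E MInf)) as [HM|HM].
  { exists MInf; split; [intros; simpl; auto|]. intros u Hu. apply Hu; auto. }
  destruct (classic (exists r, E (Fin r))) as [[r0 Hr0]|HF].
  2:{ exists PInf; split.
      - intros x Hx; destruct x; simpl; auto. exfalso; eauto.
      - intros u _; destruct u; simpl; auto. }
  set (N := fun r => E (Fin (-r))).
  destruct (classic (bound N)) as [Hb|Hb].
  - assert (Hne : exists x, N x) by (exists (-r0); unfold N; rewrite Ropp_involutive; auto).
    destruct (completeness N Hb Hne) as [m [Hm1 Hm2]].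
    exists (Fin (-m)); split.
    + intros x Hx; destruct x; simpl; auto; try contradiction.
      assert (-r <= m) by (apply Hm1; unfold N; rewrite Ropp_involutive; auto). lra.
    + intros u Hu; destruct u; simpl; auto.
      * assert (m <= -r); [|lra]. apply Hm2. intros x Hx. unfold N in Hx.
        specialize (Hu _ Hx). simpl in Hu. lra.
      * specialize (Hu _ Hr0); simpl in Hu; auto.
  - exists MInf; split; [intros; simpl; auto|].
    intros u Hu; destruct u; simpl; auto.
    + apply Hb. exists (-r). intros x Hx. unfold N in Hx. specialize (Hu _ Hx). simpl in Hu. lra.
    + specialize (Hu _ Hr0); simpl in Hu; auto.
Qed.

Lemma lub_exists (E : Rbar -> Prop) : exists l, Rbar_is_lub E l.
Proof.
  destruct (classic (E PInf)) as [HM|HM].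
  { exists PInf; split; [intros x _; destruct x; simpl; auto|]. intros u Hu. apply Hu; auto. }
  destruct (classic (exists r, E (Fin r))) as [[r0 Hr0]|HF].
  2:{ exists MInf; split.
      - intros x Hx; destruct x; simpl; auto; exfalso; eauto.
      - intros u _; destruct u; simpl; auto. }
  set (N := fun r => E (Fin r)).
  destruct (classic (bound N)) as [Hb|Hb].
  - assert (Hne : exists x, N x) by (exists r0; auto).
    destruct (completeness N Hb Hne) as [m [Hm1 Hm2]].
    exists (Fin m); split.
    + intros x Hx; destruct x; simpl; auto; try contradiction.
    + intros u Hu; destruct u; simpl; auto.
      * apply Hm2. intros x Hx. specialize (Hu _ Hx). simpl in Hu. lra.
      * specialize (Hu _ Hr0); simpl in Hu; auto.
  - exists PInf; split; [intros x _; destruct x; simpl; auto|].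
    intros u Hu; destruct u; simpl; auto.
    + apply Hb. exists r. intros x Hx. specialize (Hu _ Hx). simpl in Hu. lra.
    + specialize (Hu _ Hr0); simpl in Hu; auto.
Qed.

Lemma inf_spec E : Rbar_is_glb E (Rbar_inf E).
Proof. unfold Rbar_inf. apply epsilon_spec. apply glb_exists. Qed.
Lemma sup_spec E : Rbar_is_lub E (Rbar_sup E).
Proof. unfold Rbar_sup. apply epsilon_spec. apply lub_exists. Qed.

Lemma sext (A B : R -> Prop) : (forall x, A x <-> B x) -> A = B.
Proof. intros H; apply functional_extensionality; intros x; apply propositional_extensionality; auto. Qed.

Lemma boxd_sym x y : boxd x y = boxd y x.
Proof. unfold boxd. rewrite (Rabs_minus_sym (fst x)), (Rabs_minus_sym (snd x)). auto. Qed.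

Lemma boxd_ge0 x y : 0 <= boxd x y.
Proof. unfold boxd. pose proof (Rabs_pos (fst x - fst y)). pose proof (Rmax_l (Rabs (fst x - fst y)) (Rabs (snd x - snd y))). lra. Qed.

Lemma boxd_le x y c : boxd x y <= c <-> Rabs (fst x - fst y) <= c /\ Rabs (snd x - snd y) <= c.
Proof.
  unfold boxd; split.
  - intros H. pose proof (Rmax_l (Rabs (fst x - fst y)) (Rabs (snd x - snd y))).
    pose proof (Rmax_r (Rabs (fst x - fst y)) (Rabs (snd x - snd y))). lra.
  - intros [H1 H2]. apply Rmax_lub; auto.
Qed.

Lemma boxd_lt x y c : boxd x y < c <-> Rabs (fst x - fst y) < c /\ Rabs (snd x - snd y) < c.
Proof.
  unfold boxd; split.
  - intros H. pose proof (Rmax_l (Rabs (fst x - fst y)) (Rabs (snd x - snd y))).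
    pose proof (Rmax_r (Rabs (fst x - fst y)) (Rabs (snd x - snd y))). lra.
  - intros [H1 H2]. unfold Rmax; destruct Rle_dec; lra.
Qed.

Lemma boxd_triang x y z : boxd x z <= boxd x y + boxd y z.
Proof.
  apply boxd_le.
  pose proof (proj1 (boxd_le x y _) (Rle_refl _)) as [A1 A2].
  pose proof (proj1 (boxd_le y z _) (Rle_refl _)) as [B1 B2].
  split.
  - replace (fst x - fst z) with ((fst x - fst y) + (fst y - fst z)) by ring.
    eapply Rle_trans; [apply Rabs_triang|lra].
  - replace (snd x - snd z) with ((snd x - snd y) + (snd y - snd z)) by ring.
    eapply Rle_trans; [apply Rabs_triang|lra].
Qed.

Lemma boxd_self x : boxd x x = 0.
Proof. unfold boxd. rewrite !Rminus_diag, Rabs_R0. unfold Rmax; destruct Rle_dec; lra. Qed.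

Lemma dist_fin x S : (exists y, S y) ->
  exists d, dist_set x S = Fin d /\ 0 <= d /\ (forall y, S y -> d <= boxd x y) /\
    (forall e, 0 < e -> exists y, S y /\ boxd x y < d + e).
Proof.
  intros [y0 Hy0]. unfold dist_set.
  set (E := fun v => exists y, S y /\ v = Fin (boxd x y)).
  destruct (inf_spec E) as [H1 H2].
  assert (Hlow : Rbar_le (Fin 0) (Rbar_inf E)).
  { apply H2. intros v [y [_ ->]]. simpl. apply boxd_ge0. }
  assert (Hup : Rbar_le (Rbar_inf E) (Fin (boxd x y0))) by (apply H1; exists y0; auto).
  destruct (Rbar_inf E) as [d| |] eqn:Hd; simpl in *; try tauto.
  exists d; split; [auto|]; split; [auto|]; split.
  - intros y Hy. specialize (H1 (Fin (boxd x y))). simpl in H1. apply H1. exists y; auto.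
  - intros e He. apply NNPP; intros Hn.
    assert (Rbar_le (Fin (d + e)) (Fin d)).
    { apply H2. intros v [y [Hy ->]]. simpl. apply Rnot_lt_le. intros Hlt. apply Hn. exists y; auto. }
    simpl in H. lra.
Qed.

Lemma dist_props x S d : dist_set x S = Fin d -> (exists y, S y) ->
  0 <= d /\ (forall y, S y -> d <= boxd x y) /\
    (forall e, 0 < e -> exists y, S y /\ boxd x y < d + e).
Proof.
  intros Hd Hne. destruct (dist_fin x S Hne) as [d' [Hd' P]]. rewrite Hd in Hd'. inversion Hd'. subst. auto.
Qed.

Lemma Jmap_nz L t : t <> 0 -> Jmap L t = Rbar_div (L t) t.
Proof. intros H. unfold Jmap. destruct (Req_EM_T t 0); [contradiction|auto]. Qed.

Lemma Rabs_le_inv' x c : Rabs x <= c -> -c <= x <= c.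
Proof. unfold Rabs; destruct Rcase_abs; lra. Qed.
Lemma Rabs_lt_inv' x c : Rabs x < c -> -c < x < c.
Proof. unfold Rabs; destruct Rcase_abs; lra. Qed.
Lemma Rabs_bnd x : - Rabs x <= x <= Rabs x.
Proof. unfold Rabs; destruct Rcase_abs; lra. Qed.

Definition nice (L : R -> Rbar) : Prop :=
  (forall t, (exists r, L t = Fin r) \/ L t = PInf) /\ L 0 = Fin 0 /\
  (forall t u, t < 0 -> t < u -> u <> 0 -> Rbar_le (Jmap L t) (Jmap L u)).

Lemma nice_mono0 L : nice L -> forall t, t < 0 -> Rbar_le (Jmap L t) (Jmap L 0).
Proof.
  intros [Hv [H0 Hm]] t Ht.
  assert (Hz : Jmap L 0 = liminf0 (fun u => Rbar_div (L u) u)).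
  { unfold Jmap. destruct (Req_EM_T 0 0); [auto|lra]. }
  rewrite Hz. unfold liminf0.
  set (S := fun s => exists d, 0 < d /\ s = Rbar_inf (fun v => exists t0, t0 <> 0 /\ Rabs t0 < d /\ v = Rbar_div (L t0) t0)).
  destruct (sup_spec S) as [Hs1 _].
  set (v0 := Rbar_inf (fun v => exists t0, t0 <> 0 /\ Rabs t0 < -t /\ v = Rbar_div (L t0) t0)).
  assert (Sv0 : S v0) by (exists (-t); split; [lra|auto]).
  apply Rbar_le_trans with v0; [|apply Hs1; auto].
  destruct (inf_spec (fun v => exists t0, t0 <> 0 /\ Rabs t0 < -t /\ v = Rbar_div (L t0) t0)) as [_ Hi2].
  apply Hi2. intros v [t0 [Hnz [Ha ->]]].
  rewrite <- (Jmap_nz L t0 Hnz).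
  apply Hm; auto. assert (-t0 <= Rabs t0) by (rewrite <- Rabs_Ropp; apply RRle_abs). lra.
Qed.

Lemma nice_mono L : nice L -> forall t u, t < 0 -> t < u -> Rbar_le (Jmap L t) (Jmap L u).
Proof.
  intros HL t u Ht Htu. destruct (Req_dec u 0) as [->|Hu].
  - apply nice_mono0; auto.
  - destruct HL as [_ [_ Hm]]; apply Hm; auto.
Qed.

Lemma pos_J_le L t b : nice L -> 0 < t -> Rbar_le (Jmap L t) (Fin b) -> Rbar_le (L t) (Fin (t * b)).
Proof.
  intros [Hv _] Ht H. rewrite Jmap_nz in H by lra.
  destruct (Hv t) as [[r Hr]|Hr]; rewrite Hr in *; simpl in *.
  - apply Rmult_le_compat_l with (r := t) in H; [|lra].
    replace (t * (r / t)) with r in H by (field; lra). auto.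
  - destruct (Rlt_dec 0 t); simpl in H; [auto|lra].
Qed.

Lemma pos_J_ge L t s : 0 < t -> Rbar_le (L t) (Fin s) -> Rbar_le (Jmap L t) (Fin (s / t)).
Proof.
  intros Ht H. rewrite Jmap_nz by lra.
  destruct (L t); simpl in *; try tauto.
  - apply Rmult_le_compat_r; auto. left; apply Rinv_0_lt_compat; auto.
  - destruct (Rlt_dec 0 t); simpl; auto; lra.
Qed.

Lemma neg_J_le L t b s : t < 0 -> Rbar_le (Jmap L t) (Fin b) -> Rbar_le (L t) (Fin s) -> t * b <= s.
Proof.
  intros Ht H1 H2. rewrite Jmap_nz in H1 by lra.
  destruct (L t) as [r| |]; simpl in *; try tauto.
  - assert (r = t * (r / t)) by (field; lra).
    assert (t * b <= t * (r / t)) by (apply Rmult_le_compat_neg_l; lra). lra.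
  - destruct (Rlt_dec 0 t); simpl in H1; [lra|tauto].
Qed.

Lemma neg_J_not L t b : nice L -> t < 0 -> ~ Rbar_le (Jmap L t) (Fin b) -> exists a, L t = Fin a /\ a < t * b.
Proof.
  intros [Hv _] Ht H. rewrite Jmap_nz in H by lra.
  destruct (Hv t) as [[r Hr]|Hr]; rewrite Hr in *; simpl in *.
  - exists r; split; auto. apply Rnot_le_lt in H.
    assert (t * (r / t) < t * b) by (apply Rmult_lt_gt_compat_neg_l; lra).
    replace (t * (r / t)) with r in H0 by (field; lra). auto.
  - destruct (Rlt_dec 0 t); [lra|]. simpl in H. tauto.
Qed.

Lemma neg_case L1 L2 M c th0 b tau eta :
  nice L1 -> nice L2 -> th0 < 0 -> 0 < tau -> 0 < eta -> c < tau ->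
  c * (1 + Rabs b) < tau * eta ->
  Rbar_le (Jmap L1 th0) (Fin b) ->
  Rabs (th0 - tau) <= M -> Rabs ((th0 - tau) * (b + eta)) <= M ->
  (forall a, epi L2 a -> boxd (0, 0) a <= M -> exists a', epi L1 a' /\ boxd a a' < c) ->
  Rbar_le (Jmap L2 (th0 - tau)) (Fin (b + eta)).
Proof.
  intros N1 N2 Hth Htau Heta Hc Hce HJ HM1 HM2 H2.
  apply NNPP; intros Hn.
  destruct (neg_J_not L2 (th0 - tau) (b + eta) N2 ltac:(lra) Hn) as [a [Ha Hlt]].
  set (s0 := (th0 - tau) * (b + eta)).
  destruct (H2 (th0 - tau, s0)) as [[t s] [Hep Hd]].
  - unfold epi; simpl. rewrite Ha. simpl. unfold s0; lra.
  - apply boxd_le; simpl. rewrite !Rminus_0_l, !Rabs_Ropp. split; auto.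
  - apply boxd_lt in Hd; simpl in Hd. destruct Hd as [Hd1 Hd2].
    apply Rabs_def2 in Hd1. apply Rabs_def2 in Hd2.
    assert (Ht : t < th0) by lra.
    assert (HJt : Rbar_le (Jmap L1 t) (Fin b)).
    { eapply Rbar_le_trans; [apply nice_mono; eauto; lra|auto]. }
    unfold epi in Hep; simpl in Hep.
    pose proof (neg_J_le L1 t b s ltac:(lra) HJt Hep) as Hts.
    assert (Hb : Rabs (t * b - (th0 - tau) * b) <= c * Rabs b).
    { replace (t * b - (th0 - tau) * b) with ((t - (th0 - tau)) * b) by ring.
      rewrite Rabs_mult. apply Rmult_le_compat_r; [apply Rabs_pos|].
      apply Rabs_le; lra. }
    apply Rabs_le_inv' in Hb.
    assert (th0 * eta < 0) by (apply Rmult_neg_pos; auto).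
    unfold s0 in *. nra.
Qed.

Lemma pos_case L1 L2 M c th b del :
  nice L1 -> 0 < c -> 2 * c <= del -> del <= th ->
  Rbar_le (Jmap L1 th) (Fin b) ->
  Rabs th <= M -> Rabs (th * b) <= M ->
  (forall a, epi L1 a -> boxd (0, 0) a <= M -> exists a', epi L2 a' /\ boxd a a' < c) ->
  exists y', epi (Jmap L2) y' /\ Rabs (th - fst y') < c /\
             Rabs (b - snd y') <= 2 * c * (1 + Rabs b) / del.
Proof.
  intros N1 Hc Hcd Hd HJ HM1 HM2 H1.
  assert (Hth : 0 < th) by lra.
  pose proof (pos_J_le L1 th b N1 Hth HJ) as HL.
  destruct (H1 (th, th * b)) as [[t s] [Hep Hdd]].
  - unfold epi; simpl; auto.
  - apply boxd_le; simpl. rewrite !Rminus_0_l, !Rabs_Ropp. split; auto.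
  - apply boxd_lt in Hdd; simpl in Hdd. destruct Hdd as [Hd1 Hd2].
    pose proof (Rabs_lt_inv' _ _ Hd1). pose proof (Rabs_lt_inv' _ _ Hd2).
    assert (Ht : del / 2 <= t) by lra.
    exists (t, s / t); simpl; split; [|split; auto].
    + unfold epi; simpl. apply pos_J_ge; auto. lra.
    + assert (Hb : Rabs (b * t - s) <= c * (1 + Rabs b)).
      { replace (b * t - s) with (b * (t - th) + (th * b - s)) by ring.
        eapply Rle_trans; [apply Rabs_triang|]. rewrite Rabs_mult.
        assert (Rabs (t - th) <= c) by (apply Rabs_le; lra).
        assert (Rabs b * Rabs (t - th) <= Rabs b * c) by (apply Rmult_le_compat_l; auto; apply Rabs_pos).
        lra. }
      replace (b - s / t) with ((b * t - s) / t) by (field; lra).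
      unfold Rdiv. rewrite Rabs_mult, (Rabs_pos_eq (/ t)) by (left; apply Rinv_0_lt_compat; lra).
      apply Rle_trans with (c * (1 + Rabs b) * / t).
      * apply Rmult_le_compat_r; auto. left; apply Rinv_0_lt_compat; lra.
      * replace (2 * c * (1 + Rabs b) * / del) with (c * (1 + Rabs b) * / (del / 2)) by (field; lra).
        apply Rmult_le_compat_l. { pose proof (Rabs_pos b); nra. }
        apply Rinv_le_contravar; lra.
Qed.

Lemma core L1 L2 e R M c :
  nice L1 -> nice L2 -> 0 < e -> 0 <= R -> 0 < c -> 8 * c < e ->
  16 * c * (1 + R) < e * e -> R + e <= M -> (R + e) * (R + e) <= M ->
  (forall a, epi L1 a -> boxd (0, 0) a <= M -> exists a', epi L2 a' /\ boxd a a' < c) ->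
  (forall a, epi L2 a -> boxd (0, 0) a <= M -> exists a', epi L1 a' /\ boxd a a' < c) ->
  forall y, epi (Jmap L1) y -> boxd (0, 0) y <= R ->
  exists y', epi (Jmap L2) y' /\ boxd y y' <= e.
Proof.
  intros N1 N2 He HR Hc Hc8 Hc16 HM1 HM2 H1 H2 [th b] Hy HyR.
  unfold epi in Hy; simpl in Hy.
  apply boxd_le in HyR; simpl in HyR. rewrite !Rminus_0_l, !Rabs_Ropp in HyR.
  destruct HyR as [Hth Hb].
  pose proof (Rabs_le_inv' _ _ Hth). pose proof (Rabs_le_inv' _ _ Hb).
  assert (HRR : R * R <= (R + e) * (R + e)) by nra.
  destruct (Rle_dec (e / 4) th) as [Hpos|Hneg].
  - destruct (pos_case L1 L2 M c th b (e / 4) N1 Hc ltac:(lra) Hpos Hy ltac:(lra)) as [y' [Hy' [Hd1 Hd2]]].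
    + rewrite Rabs_mult. assert (Rabs th * Rabs b <= R * R) by (apply Rmult_le_compat; auto; apply Rabs_pos). lra.
    + auto.
    + exists y'; split; auto. apply boxd_le; simpl. split; [lra|].
      eapply Rle_trans; [apply Hd2|].
      apply Rle_trans with (8 * c * (1 + R) / e).
      * replace (2 * c * (1 + Rabs b) / (e / 4)) with (8 * c * (1 + Rabs b) / e) by (field; lra).
        unfold Rdiv. apply Rmult_le_compat_r; [left; apply Rinv_0_lt_compat; lra|]. nra.
      * apply Rle_trans with (e / 2); [|lra].
        unfold Rdiv. apply Rmult_le_reg_r with e; auto.
        rewrite Rmult_assoc, Rinv_l by lra. nra.
  - apply Rnot_le_lt in Hneg.
    set (th0 := if Rle_dec th (- (e / 4)) then th else - (e / 4)).
    assert (Hth0 : th0 < 0 /\ th0 <= th /\ - R - (e / 4) <= th0 /\ Rabs (th - (th0 - (e / 4))) <= e).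
    { unfold th0; destruct Rle_dec; repeat split; try lra; apply Rabs_le; lra. }
    destruct Hth0 as [Ht0 [Ht0' [Ht0'' Hdist]]].
    assert (HJ0 : Rbar_le (Jmap L1 th0) (Fin b)).
    { destruct Ht0' as [Hlt|Heq].
      - eapply Rbar_le_trans; [apply nice_mono; eauto|auto].
      - rewrite Heq; auto. }
    assert (Hneg2 := neg_case L1 L2 M c th0 b (e / 4) (e / 4) N1 N2 Ht0 ltac:(lra)
                   ltac:(lra) ltac:(lra)).
    exists (th0 - (e / 4), b + e / 4); split.
    + unfold epi; simpl. apply Hneg2; auto.
      * assert (Rabs b <= R) by auto. nra.
      * apply Rabs_le; lra.
      * rewrite Rabs_mult.
        assert (Rabs (th0 - (e / 4)) <= R + e) by (apply Rabs_le; lra).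
        assert (Rabs (b + e / 4) <= R + e) by (apply Rabs_le; lra).
        assert (Rabs (th0 - (e / 4)) * Rabs (b + e / 4) <= (R + e) * (R + e)) by (apply Rmult_le_compat; auto; apply Rabs_pos).
        lra.
    + apply boxd_le; simpl. split; auto. apply Rabs_le; lra.
Qed.

Lemma cl_partner L1 L2 e R M c :
  nice L1 -> nice L2 -> 0 < e -> e <= 1 -> 0 <= R -> 0 < c -> 8 * c < e ->
  16 * c * (1 + (R + 1)) < e * e -> (R + 1) + e <= M -> ((R + 1) + e) * ((R + 1) + e) <= M ->
  (forall a, epi L1 a -> boxd (0, 0) a <= M -> exists a', epi L2 a' /\ boxd a a' < c) ->
  (forall a, epi L2 a -> boxd (0, 0) a <= M -> exists a', epi L1 a' /\ boxd a a' < c) ->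
  forall y, closure2 (epi (Jmap L1)) y -> boxd (0, 0) y <= R ->
  exists y', closure2 (epi (Jmap L2)) y' /\ boxd y y' <= 2 * e.
Proof.
  intros N1 N2 He He1 HR Hc H8 H16 HM1 HM2 H1 H2 y Hy HyR.
  destruct (Hy e He) as [z [Hz Hyz]].
  assert (Hz0 : boxd (0, 0) z <= R + 1).
  { pose proof (boxd_triang (0, 0) y z). lra. }
  destruct (core L1 L2 e (R + 1) M c N1 N2 He ltac:(lra) Hc H8 H16 HM1 HM2 H1 H2 z Hz Hz0) as [z' [Hz' Hzz']].
  exists z'; split.
  - intros e0 He0. exists z'; split; auto. rewrite boxd_self; auto.
  - pose proof (boxd_triang y z z'). lra.
Qed.

Lemma le_eps a b : (forall eta, 0 < eta < 1 -> a <= b + eta) -> a <= b.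
Proof.
  intros H. apply Rnot_lt_le; intros Hlt.
  set (eta := Rmin ((a - b) / 2) (1/2)).
  assert (0 < eta < 1) by (unfold eta, Rmin; destruct Rle_dec; lra).
  specialize (H eta H0). assert (eta <= (a - b) / 2) by (unfold eta; apply Rmin_l). lra.
Qed.

Lemma nat_large X : exists n : nat, (1 <= n)%nat /\ X <= INR n.
Proof.
  destruct (INR_unbounded (Rmax X 1)) as [n Hn].
  exists n; split.
  - destruct n; [simpl in Hn; pose proof (Rmax_r X 1); lra|lia].
  - pose proof (Rmax_l X 1); lra.
Qed.

Lemma inV_extract L1 L2 m :
  (1 <= m)%nat -> nice L1 -> nice L2 -> inV m (epi L1) (epi L2) ->
  (forall a, epi L1 a -> boxd (0, 0) a <= INR m -> exists a', epi L2 a' /\ boxd a a' < / INR m) /\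
  (forall a, epi L2 a -> boxd (0, 0) a <= INR m -> exists a', epi L1 a' /\ boxd a a' < / INR m).
Proof.
  intros Hm N1 N2 [c0 [Hc0 Hx]].
  assert (Ne1 : exists y, epi L1 y) by (exists (0, 0); unfold epi; simpl; destruct N1 as [_ [-> _]]; simpl; lra).
  assert (Ne2 : exists y, epi L2 y) by (exists (0, 0); unfold epi; simpl; destruct N2 as [_ [-> _]]; simpl; lra).
  split.
  - intros a Ha HaM. destruct (Hx a HaM) as [d1 [d2 [Hd1 [Hd2 Hab]]]].
    destruct (dist_props _ _ _ Hd1 Ne2) as [P1 [P2 P3]].
    destruct (dist_props _ _ _ Hd2 Ne1) as [Q1 [Q2 Q3]].
    specialize (Q2 a Ha). rewrite boxd_self in Q2.
    apply Rabs_le_inv' in Hab.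
    destruct (P3 (/ INR m - d1)) as [a' [Ha' Hd]]; [lra|].
    exists a'; split; auto. lra.
  - intros a Ha HaM. destruct (Hx a HaM) as [d1 [d2 [Hd1 [Hd2 Hab]]]].
    destruct (dist_props _ _ _ Hd1 Ne2) as [P1 [P2 P3]].
    destruct (dist_props _ _ _ Hd2 Ne1) as [Q1 [Q2 Q3]].
    specialize (P2 a Ha). rewrite boxd_self in P2.
    apply Rabs_le_inv' in Hab.
    destruct (Q3 (/ INR m - d2)) as [a' [Ha' Hd]]; [lra|].
    exists a'; split; auto. lra.
Qed.

Lemma assembly (XL : (R -> Rbar) -> Prop) (XLn : forall f, XL f -> nice f) :
  forall f : R -> Rbar, XL f ->
  forall k : nat, (1 <= k)%nat ->
  exists m : nat, (1 <= m)%nat /\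
    forall g : R -> Rbar, XL g ->
      inV m (epi f) (epi g) ->
      inV k (closure2 (epi (Jmap f))) (closure2 (epi (Jmap g))).
Proof.
  intros f Hf k Hk. pose proof (XLn f Hf) as Nf.
  set (kk := INR k).
  assert (Hkk : 1 <= kk) by (unfold kk; apply (le_INR 1); auto).
  set (b0 := match Jmap f (-1) with Fin v => v | _ => 0 end).
  assert (Hy0 : epi (Jmap f) (-1, b0)).
  { unfold epi, b0; simpl. rewrite Jmap_nz by lra.
    destruct Nf as [Hv _]. destruct (Hv (-1)) as [[r ->] | ->]; simpl; [lra|].
    destruct (Rlt_dec 0 (-1)); simpl; auto; lra. }
  set (r0 := 1 + Rabs b0).
  assert (Hr0 : boxd (0, 0) (-1, b0) <= r0).
  { apply boxd_le; simpl. rewrite !Rminus_0_l, !Rabs_Ropp. unfold r0. split.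
    - pose proof (Rabs_pos b0). unfold Rabs at 1; destruct Rcase_abs; lra.
    - lra. }
  assert (Hr0p : 0 <= r0) by (unfold r0; pose proof (Rabs_pos b0); lra).
  set (R0 := 2 * kk + r0 + 3).
  set (e := / (4 * kk)).
  assert (He : 0 < e) by (unfold e; apply Rinv_0_lt_compat; lra).
  assert (He1 : e <= 1 / 4).
  { unfold e. replace (1/4) with (/ 4) by field. apply Rinv_le_contravar; lra. }
  set (c := e * e / (32 * (1 + (R0 + 1)))).
  assert (HR0 : 0 <= R0) by (unfold R0; lra).
  assert (Hc : 0 < c) by (unfold c; apply Rdiv_lt_0_compat; [nra|lra]).
  assert (H16 : 16 * c * (1 + (R0 + 1)) < e * e).
  { unfold c. field_simplify; [nra|lra]. }
  assert (H8 : 8 * c < e).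
  { unfold c. apply Rmult_lt_reg_r with (32 * (1 + (R0 + 1))); [lra|].
    field_simplify; [|lra]. assert (e * e <= e * (1/4)) by (apply Rmult_le_compat_l; lra). nra. }
  set (M := (R0 + 1 + e) * (R0 + 1 + e) + (R0 + 1 + e)).
  assert (HM1 : R0 + 1 + e <= M) by (unfold M; nra).
  assert (HM2 : (R0 + 1 + e) * (R0 + 1 + e) <= M) by (unfold M; lra).
  destruct (nat_large (Rmax M (/ c))) as [m [Hm1 Hm2]].
  exists m; split; auto.
  intros g Hg HV. pose proof (XLn g Hg) as Ng.
  assert (HmM : M <= INR m) by (pose proof (Rmax_l M (/ c)); lra).
  assert (Hmc : / INR m <= c).
  { assert (/ c <= INR m) by (pose proof (Rmax_r M (/ c)); lra).
    replace c with (/ / c) by (field; lra). apply Rinv_le_contravar; auto.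
    apply Rinv_0_lt_compat; auto. }
  destruct (inV_extract f g m Hm1 Nf Ng HV) as [E1 E2].
  assert (H1 : forall a, epi f a -> boxd (0, 0) a <= M -> exists a', epi g a' /\ boxd a a' < c).
  { intros a Ha HaM. destruct (E1 a Ha ltac:(lra)) as [a' [? ?]]. exists a'; split; auto; lra. }
  assert (H2 : forall a, epi g a -> boxd (0, 0) a <= M -> exists a', epi f a' /\ boxd a a' < c).
  { intros a Ha HaM. destruct (E2 a Ha ltac:(lra)) as [a' [? ?]]. exists a'; split; auto; lra. }
  pose proof (cl_partner f g e R0 M c Nf Ng He ltac:(lra) HR0 Hc H8 H16 HM1 HM2 H1 H2) as P12.
  pose proof (cl_partner g f e R0 M c Ng Nf He ltac:(lra) HR0 Hc H8 H16 HM1 HM2 H2 H1) as P21.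
  assert (Cy0 : closure2 (epi (Jmap f)) (-1, b0)).
  { intros e0 He0. exists (-1, b0); split; auto. rewrite boxd_self; auto. }
  destruct (P12 _ Cy0 ltac:(unfold R0; lra)) as [y0' [Cy0' Hy0']].
  exists (2 * e); split.
  { unfold e. replace (2 * / (4 * kk)) with (/ (2 * kk)) by (field; lra).
    apply Rinv_lt_contravar; change (INR k) with kk. { apply Rmult_lt_0_compat; lra. } lra. }
  intros x Hx. change (INR k) with kk in Hx.
  destruct (dist_fin x _ (ex_intro _ _ Cy0')) as [d1 [Hd1 [A1 [A2 A3]]]].
  destruct (dist_fin x _ (ex_intro _ _ Cy0)) as [d2 [Hd2 [B1 [B2 B3]]]].
  exists d1, d2; split; auto; split; auto.
  assert (Hx0 : boxd x (0, 0) <= kk) by (rewrite boxd_sym; auto).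
  apply Rabs_le; split.
  -
    cut (d2 <= d1 + 2 * e); [lra|].
    apply le_eps; intros eta Heta.
    destruct (A3 eta ltac:(lra)) as [y' [Cy' Hy']].
    pose proof (A2 _ Cy0'). pose proof (boxd_triang x (0,0) y0').
    pose proof (boxd_triang (0,0) (-1, b0) y0').
    assert (Hb' : boxd (0, 0) y' <= R0).
    { pose proof (boxd_triang (0,0) x y'). unfold R0; lra. }
    destruct (P21 y' Cy' Hb') as [y [Cy Hyy]].
    pose proof (B2 y Cy). pose proof (boxd_triang x y' y). lra.
  - apply le_eps; intros eta Heta.
    destruct (B3 eta ltac:(lra)) as [y [Cy Hy]].
    pose proof (B2 _ Cy0). pose proof (boxd_triang x (0,0) (-1, b0)).
    assert (Hb' : boxd (0, 0) y <= R0).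
    { pose proof (boxd_triang (0,0) x y). unfold R0; lra. }
    destruct (P12 y Cy Hb') as [y' [Cy' Hyy]].
    pose proof (A2 y' Cy'). pose proof (boxd_triang x y y'). lra.
Qed.

Lemma borel_True : borel (fun _ => True).
Proof. apply borel_open. intros x _. exists (mkposreal 1 Rlt_0_1). intros y _; auto. Qed.

Lemma borel_ext A B : (forall x, A x <-> B x) -> borel A -> borel B.
Proof. intros H HA. rewrite <- (sext A B H); auto. Qed.

Lemma borel_False : borel (fun _ => False).
Proof. apply borel_ext with (fun x => ~ True). { intros; tauto. } apply borel_compl, borel_True. Qed.

Lemma borel_or A B : borel A -> borel B -> borel (fun x => A x \/ B x).
Proof.
  intros HA HB. apply borel_ext with (fun x => exists n : nat, (match n with O => A | _ => B end) x).
  - intros x; split.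
    + intros [[|n] H]; auto.
    + intros [H|H]; [exists O|exists 1%nat]; auto.
  - apply borel_union. intros [|n]; auto.
Qed.

Lemma borel_and A B : borel A -> borel B -> borel (fun x => A x /\ B x).
Proof.
  intros HA HB. apply borel_ext with (fun x => ~ (~ A x \/ ~ B x)).
  - intros x; tauto.
  - apply borel_compl, borel_or; apply borel_compl; auto.
Qed.

Lemma borel_gt a : borel (fun t => a < t).
Proof.
  apply borel_open. intros x Hx.
  exists (mkposreal (x - a) ltac:(lra)). intros y Hy. unfold disc in Hy; simpl in Hy.
  apply Rabs_lt_inv' in Hy. lra.
Qed.

Lemma borel_lt b : borel (fun t => t < b).
Proof.
  apply borel_open. intros x Hx.
  exists (mkposreal (b - x) ltac:(lra)). intros y Hy. unfold disc in Hy; simpl in Hy.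
  apply Rabs_lt_inv' in Hy. lra.
Qed.

Lemma borel_ge a : borel (fun t => a <= t).
Proof. apply borel_ext with (fun t => ~ (t < a)). { intros; split; intros; lra. } apply borel_compl, borel_lt. Qed.

Lemma borel_Ico a b : borel (fun t => a <= t < b).
Proof. apply borel_and; [apply borel_ge|apply borel_lt]. Qed.

Lemma borel_abs_lt c : borel (fun t => Rabs t < c).
Proof.
  apply borel_ext with (fun t => - c < t /\ t < c).
  - intros t; split.
    + intros [H1 H2]. apply Rabs_def1; auto.
    + intros H; apply Rabs_lt_inv'; auto.
  - apply borel_and; [apply borel_gt|apply borel_lt].
Qed.

Lemma borel_abs_ge c : borel (fun t => c <= Rabs t).
Proof. apply borel_ext with (fun t => ~ (Rabs t < c)). { intros; split; intros; lra. } apply borel_compl, borel_abs_lt. Qed.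

Lemma mu_ext (mu : (R -> Prop) -> R) A B : (forall x, A x <-> B x) -> mu A = mu B.
Proof. intros H; rewrite (sext A B H); auto. Qed.

Lemma mu_pos (mu : (R -> Prop) -> R) (Pmu : is_prob_measure mu) A : borel A -> 0 <= mu A.
Proof. destruct Pmu as [H _]; auto. Qed.

Lemma mu_True (mu : (R -> Prop) -> R) (Pmu : is_prob_measure mu) : mu (fun _ => True) = 1.
Proof. destruct Pmu as [_ [H _]]; auto. Qed.

Lemma lim_const (K l : R) (s : nat -> R) : infinite_sum s l ->
  (forall n, (1 <= n)%nat -> sum_f_R0 s n = K) -> K = l.
Proof.
  intros Hs HK. apply NNPP; intros Hne.
  assert (He : Rabs (K - l) > 0) by (apply Rabs_pos_lt; lra).
  destruct (Hs _ He) as [N HN]. specialize (HN (S N) ltac:(lia)).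
  rewrite HK in HN by lia. unfold Rdist in HN. lra.
Qed.

Lemma mu_False (mu : (R -> Prop) -> R) (Pmu : is_prob_measure mu) : mu (fun _ => False) = 0.
Proof.
  pose proof Pmu as [_ [_ Hadd]].
  specialize (Hadd (fun _ _ => False) (fun _ => borel_False) ltac:(intros; auto)). cbv beta in Hadd.
  rewrite (mu_ext mu (fun x => exists n : nat, False) (fun _ => False)) in Hadd by (intros x; split; [intros [_ []]|tauto]).
  set (m := mu (fun _ => False)) in *.
  apply NNPP; intros Hne.
  assert (He : Rabs m > 0) by (apply Rabs_pos_lt; auto).
  destruct (Hadd _ He) as [N HN]. specialize (HN (S N) ltac:(lia)).
  rewrite sum_cte in HN. unfold Rdist in HN.
  replace (m * INR (S (S N)) - m) with (m * INR (S N)) in HN by (rewrite (S_INR (S N)); ring).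
  rewrite Rabs_mult, (Rabs_pos_eq (INR (S N))) in HN by apply pos_INR.
  assert (1 <= INR (S N)) by (apply (le_INR 1); lia).
  assert (Rabs m * 1 <= Rabs m * INR (S N)) by (apply Rmult_le_compat_l; auto; apply Rabs_pos).
  lra.
Qed.

Lemma mu_empty (mu : (R -> Prop) -> R) (Pmu : is_prob_measure mu) A : (forall x, ~ A x) -> mu A = 0.
Proof. intros H. rewrite (mu_ext mu A (fun _ => False)); [apply (mu_False mu Pmu)|]. intros x; split; [apply H|tauto]. Qed.

Lemma mu_or (mu : (R -> Prop) -> R) (Pmu : is_prob_measure mu) A B : borel A -> borel B -> (forall x, A x -> B x -> False) ->
  mu (fun x => A x \/ B x) = mu A + mu B.
Proof.
  intros HA HB Hd. pose proof Pmu as [_ [_ Hadd]].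
  set (F := fun n : nat => match n with O => A | 1%nat => B | _ => fun _ : R => False end).
  assert (HF : forall n, borel (F n)) by (intros [|[|n]]; simpl; auto; apply borel_False).
  assert (HD : forall n m x, n <> m -> F n x -> F m x -> False).
  { intros [|[|n]] [|[|m]] x Hnm; simpl; intros; eauto; lia. }
  specialize (Hadd F HF HD).
  rewrite (mu_ext mu (fun x => exists n, F n x) (fun x => A x \/ B x)) in Hadd.
  - symmetry. apply (lim_const _ _ _ Hadd).
    intros n Hn. destruct n; [lia|]. clear Hn. induction n.
    + simpl. auto.
    + rewrite tech5, IHn. simpl F. rewrite (mu_False mu Pmu); ring.
  - intros x; split.
    + intros [[|[|n]] H]; simpl in H; auto; tauto.
    + intros [H|H]; [exists O|exists 1%nat]; auto.
Qed.

Lemma mu_mono (mu : (R -> Prop) -> R) (Pmu : is_prob_measure mu) A B : borel A -> borel B -> (forall x, A x -> B x) -> mu A <= mu B.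
Proof.
  intros HA HB Hs.
  rewrite (mu_ext mu B (fun x => A x \/ (B x /\ ~ A x))).
  - rewrite (mu_or mu Pmu); auto.
    + pose proof (mu_pos mu Pmu (fun x => B x /\ ~ A x) (borel_and _ _ HB (borel_compl _ HA))). lra.
    + apply borel_and; auto; apply borel_compl; auto.
    + intros x H1 [_ H2]; auto.
  - intros x; split.
    + intros H. destruct (classic (A x)); auto.
    + intros [H|[H _]]; auto.
Qed.

Lemma mu_split (mu : (R -> Prop) -> R) (Pmu : is_prob_measure mu) A B : borel A -> borel B ->
  mu A = mu (fun x => A x /\ B x) + mu (fun x => A x /\ ~ B x).
Proof.
  intros HA HB. rewrite <- (mu_or mu Pmu).
  - apply (mu_ext mu). intros x; split.
    + intros H. destruct (classic (B x)); auto.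
    + intros [[H _]|[H _]]; auto.
  - apply borel_and; auto.
  - apply borel_and; auto. apply borel_compl; auto.
  - intros x [_ H1] [_ H2]; auto.
Qed.

Lemma cmu_le (mu : (R -> Prop) -> R) (Pmu : is_prob_measure mu) A c K : borel A -> (forall x, A x -> c <= K) -> c * mu A <= K * mu A.
Proof.
  intros HA H. destruct (classic (exists x, A x)) as [[x Hx]|Hn].
  - apply Rmult_le_compat_r; [apply (mu_pos mu Pmu); auto|apply (H x Hx)].
  - rewrite (mu_empty mu Pmu); [lra|]. intros x Hx; apply Hn; eauto.
Qed.


Definition disj (a b : R * (R -> Prop)) := forall x, snd a x -> snd b x -> False.
Fixpoint PD (l : list (R * (R -> Prop))) : Prop :=
  match l with nil => True | a :: l => (forall b, In b l -> disj a b) /\ PD l end.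
Definition good (g : R -> R) (a : R * (R -> Prop)) :=
  0 <= fst a /\ borel (snd a) /\ forall x, snd a x -> fst a <= g x.

Definition d0 : R * (R -> Prop) := (0, fun _ => False).

Lemma sb_iff mu g l : simple_below mu g l <-> (forall a, In a l -> good g a) /\ PD l.
Proof.
  unfold simple_below; split.
  - intros [H1 H2]. split.
    + intros a Ha. destruct (In_nth l a d0 Ha) as [i [Hi <-]]. apply H1; auto.
    + clear H1. revert H2. induction l as [|a l IH]; simpl; auto. intros H2. split.
      * intros b Hb x Ha Hbx. destruct (In_nth l b d0 Hb) as [j [Hj <-]].
        apply (H2 0%nat (S j) x); simpl; auto; lia.
      * apply IH. intros i j x Hi Hj Hij. apply (H2 (S i) (S j) x); simpl; lia.
  - intros [H1 H2]. split.
    + intros i Hi. apply H1. apply nth_In; auto.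
    + clear H1. induction l as [|a l IH]; simpl; intros i j x Hi Hj Hij.
      * lia.
      * destruct H2 as [Ha Hl]. destruct i as [|i], j as [|j].
        -- lia.
        -- intros H H'. apply (Ha (nth j l d0) ltac:(apply nth_In; lia) x H H').
        -- intros H H'. apply (Ha (nth i l d0) ltac:(apply nth_In; lia) x H' H).
        -- apply IH; auto; lia.
Qed.

Lemma si_app mu l1 l2 : simple_integral mu (l1 ++ l2) = simple_integral mu l1 + simple_integral mu l2.
Proof. induction l1 as [|a l IH]; simpl; [ring|]. rewrite IH; ring. Qed.

Lemma PD_app l1 l2 : PD l1 -> PD l2 -> (forall a b, In a l1 -> In b l2 -> disj a b) -> PD (l1 ++ l2).
Proof.
  induction l1 as [|a l IH]; simpl; auto. intros [Ha Hl] H2 Hc. split.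
  - intros b Hb. apply in_app_or in Hb. destruct Hb; auto.
  - apply IH; auto.
Qed.

Lemma int_ge mu g l : simple_below mu g l -> Rbar_le (Fin (simple_integral mu l)) (integral_nonneg mu g).
Proof. intros H. unfold integral_nonneg. destruct (sup_spec (fun v => exists l, simple_below mu g l /\ v = Fin (simple_integral mu l))) as [H1 _]. apply H1. eauto. Qed.

Lemma int_le mu g K : (forall l, simple_below mu g l -> simple_integral mu l <= K) -> Rbar_le (integral_nonneg mu g) (Fin K).
Proof. intros H. unfold integral_nonneg. destruct (sup_spec (fun v => exists l, simple_below mu g l /\ v = Fin (simple_integral mu l))) as [_ H2]. apply H2. intros v [l [Hl ->]]. simpl; auto. Qed.

Definition Ul (l : list (R * (R -> Prop))) := fun x => exists a, In a l /\ snd a x.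

Lemma si_le_U mu g l : is_prob_measure mu -> (forall x, g x <= 1) -> (forall a, In a l -> good g a) -> PD l ->
  borel (Ul l) /\ simple_integral mu l <= mu (Ul l).
Proof.
  intros Pm Hg. induction l as [|a l IH]; simpl; intros Hgood HPD.
  - assert (He : forall x, ~ Ul nil x) by (intros x [a [[] _]]).
    split.
    + apply borel_ext with (fun _ => False); [intros x; split; [tauto|apply He]|apply borel_False].
    + rewrite mu_empty; auto; lra.
  - destruct HPD as [Ha Hl]. destruct (IH (fun b Hb => Hgood b (or_intror Hb)) Hl) as [HB Hs].
    destruct (Hgood a (or_introl eq_refl)) as [Hc [Hba Hle]].
    assert (Hext : forall x, Ul (a :: l) x <-> snd a x \/ Ul l x).
    { intros x; split.
      - intros [b [[<-|Hb] Hx]]; [left; auto|right; exists b; auto].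
      - intros [H|[b [Hb H]]]; [exists a; simpl; auto|exists b; simpl; auto]. }
    split.
    + apply borel_ext with (fun x => snd a x \/ Ul l x); [intros; symmetry; apply Hext|apply borel_or; auto].
    + rewrite (mu_ext mu _ _ Hext). rewrite mu_or; auto.
      * assert (fst a * mu (snd a) <= 1 * mu (snd a)).
        { apply (cmu_le mu Pm); [auto|]. intros x Hx. apply Rle_trans with (g x); [apply Hle; auto|apply Hg]. }
        lra.
      * intros x H1 [b [Hb H2]]. apply (Ha b Hb x); auto.
Qed.

Lemma mgf0 nu : is_prob_measure nu -> mgf nu 0 = Fin 1.
Proof.
  intros Pm. unfold mgf. apply Rbar_le_antisym.
  - apply int_le. intros l Hl. apply sb_iff in Hl. destruct Hl as [H1 H2].
    destruct (si_le_U nu (fun x => exp (0 * x)) l Pm) as [HB Hs]; auto.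
    + intros x. rewrite Rmult_0_l, exp_0; lra.
    + pose proof (mu_mono nu Pm _ _ HB borel_True (fun _ _ => I)). rewrite mu_True in H; auto. lra.
  - replace 1 with (simple_integral nu ((1, fun _ => True) :: nil)).
    + apply int_ge. apply sb_iff. split; [|simpl; split; [intros _ []|auto]].
      intros a [<-|[]]. split; simpl; [lra|split; [apply borel_True|]].
      intros x _. rewrite Rmult_0_l, exp_0; lra.
    + simpl. rewrite mu_True; auto. ring.
Qed.

Lemma floor_ex x : 0 <= x -> exists n : nat, INR n <= x < INR n + 1.
Proof.
  intros Hx. destruct (INR_unbounded x) as [M HM].
  induction M as [|M IH].
  - simpl in HM; lra.
  - destruct (Rlt_dec x (INR M)) as [H|H]; [apply IH; lra|].
    exists M. rewrite S_INR in HM. lra.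
Qed.

Lemma shell_disj n m t : INR n <= t < INR n + 1 -> INR m <= t < INR m + 1 -> n = m.
Proof.
  intros H1 H2. destruct (Nat.lt_total n m) as [H|[H|H]]; auto.
  - apply le_INR in H. rewrite S_INR in H. lra.
  - apply le_INR in H. rewrite S_INR in H. lra.
Qed.

Lemma tail_small mu : is_prob_measure mu -> forall e, 0 < e -> exists N : nat, mu (fun t => INR N <= Rabs t) < e.
Proof.
  intros Pm e He.
  set (D := fun (n : nat) (t : R) => INR n <= Rabs t < INR n + 1).
  assert (HD : forall n, borel (D n)) by (intros n; apply borel_and; [apply borel_abs_ge|apply borel_abs_lt]).
  destruct Pm as [P1 [P2 Hadd]].
  assert (Hadd' := Hadd D HD ltac:(intros n m x Hnm H1 H2; apply Hnm; eapply shell_disj; eauto)).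
  rewrite (mu_ext mu (fun x => exists n, D n x) (fun _ => True)) in Hadd'.
  2:{ intros x; split; auto. intros _. destruct (floor_ex (Rabs x) (Rabs_pos x)) as [n Hn]. exists n; auto. }
  rewrite P2 in Hadd'.
  assert (Pm : is_prob_measure mu) by (split; auto).
  assert (Hball : forall n, mu (fun t => Rabs t < INR (S n)) = sum_f_R0 (fun i => mu (D i)) n).
  { induction n.
    - simpl. apply mu_ext. intros t; unfold D; simpl. pose proof (Rabs_pos t); split; intros; lra.
    - rewrite tech5, <- IHn.
      rewrite (mu_ext mu _ (fun t => Rabs t < INR (S n) \/ D (S n) t)).
      + apply mu_or; auto. apply borel_abs_lt. intros t H1 H2. unfold D in H2. lra.
      + intros t. unfold D. rewrite !S_INR. split; [intros H; destruct (Rlt_dec (Rabs t) (INR n + 1)); [left|right]|intros [H|H]]; lra. }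
  destruct (Hadd' e He) as [N HN].
  exists (S N).
  rewrite (mu_split mu Pm (fun _ => True) (fun t => Rabs t < INR (S N)) borel_True (borel_abs_lt _)) in P2.
  rewrite (mu_ext mu (fun x => True /\ Rabs x < INR (S N)) (fun t => Rabs t < INR (S N))) in P2 by tauto.
  rewrite (mu_ext mu (fun x => True /\ ~ Rabs x < INR (S N)) (fun t => INR (S N) <= Rabs t)) in P2
    by (intros; split; [intros [_ H]; lra|intros H; split; auto; lra]).
  rewrite Hball in P2. specialize (HN N (Nat.le_refl _)). unfold Rdist in HN.
  apply Rabs_lt_inv' in HN. lra.
Qed.

Definition Ival (a0 h : R) (j : nat) (t : R) := a0 + INR j * h <= t < a0 + INR (S j) * h.

Fixpoint pcs (kap : nat -> R) (A : R -> Prop) (I : nat -> R -> Prop) (K : nat) : list (R * (R -> Prop)) :=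
  match K with O => nil | S K => pcs kap A I K ++ ((kap K, fun t => A t /\ I K t) :: nil) end.

Definition sumL (F : R * (R -> Prop) -> R) l := fold_right (fun a acc => F a + acc) 0 l.
Fixpoint sumN (G : nat -> R) K := match K with O => 0 | S K => sumN G K + G K end.

Lemma si_pcs mu kap A I K : simple_integral mu (pcs kap A I K) = sumN (fun j => kap j * mu (fun t => A t /\ I j t)) K.
Proof. induction K; simpl; auto. rewrite si_app, IHK. simpl. ring. Qed.

Lemma si_flat mu (Fl : R * (R -> Prop) -> list (R * (R -> Prop))) l :
  simple_integral mu (flat_map Fl l) = sumL (fun a => simple_integral mu (Fl a)) l.
Proof. induction l; simpl; auto. rewrite si_app, IHl. auto. Qed.

Lemma sumL_le3 (F X Y Z : R * (R -> Prop) -> R) al be l :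
  (forall a, In a l -> F a <= al * X a + be * Y a + Z a) ->
  sumL F l <= al * sumL X l + be * sumL Y l + sumL Z l.
Proof.
  induction l; simpl; intros H; [lra|].
  assert (IH := IHl (fun b Hb => H b (or_intror Hb))).
  specialize (H a (or_introl eq_refl)). lra.
Qed.

Lemma sumN_le2 (F X Y : nat -> R) al be K :
  (forall j, (j < K)%nat -> F j <= al * X j + be * Y j) ->
  sumN F K <= al * sumN X K + be * sumN Y K.
Proof.
  induction K; simpl; intros H; [lra|].
  assert (IH := IHK (fun j Hj => H j ltac:(lia))). specialize (H K ltac:(lia)). lra.
Qed.

Lemma sumN_scal (F : nat -> R) c K : sumN (fun j => c * F j) K = c * sumN F K.
Proof. induction K; simpl; [ring|rewrite IHK; ring]. Qed.

Lemma sumL_fst_scal l m : sumL (fun a => fst a * m) l = sumL fst l * m.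
Proof. induction l; simpl; [ring|rewrite IHl; ring]. Qed.

Lemma in_pcs kap A I K q : In q (pcs kap A I K) -> exists j, (j < K)%nat /\ q = (kap j, fun t => A t /\ I j t).
Proof.
  induction K; simpl; [tauto|]. intros H. apply in_app_or in H. destruct H as [H|[H|[]]].
  - destruct (IHK H) as [j [Hj ->]]. exists j; split; auto; lia.
  - exists K; split; auto.
Qed.

Lemma PD_pcs kap A I K : (forall i j t, i <> j -> I i t -> I j t -> False) -> PD (pcs kap A I K).
Proof.
  intros HI. induction K; simpl; auto. apply PD_app; auto.
  - simpl; split; auto. intros _ [].
  - intros a b Ha [<-|[]]. destruct (in_pcs _ _ _ _ _ Ha) as [j [Hj ->]].
    intros x [_ H1] [_ H2]. simpl in *. apply (HI j K x); auto; lia.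
Qed.

Lemma PD_flat kap I K l : (forall i j t, i <> j -> I i t -> I j t -> False) -> PD l ->
  PD (flat_map (fun a => pcs kap (snd a) I K) l).
Proof.
  intros HI. induction l as [|a l IH]; simpl; auto. intros [Ha Hl]. apply PD_app; auto.
  - apply PD_pcs; auto.
  - intros q q' Hq Hq'. apply in_flat_map in Hq'. destruct Hq' as [b [Hb Hq']].
    destruct (in_pcs _ _ _ _ _ Hq) as [j [_ ->]]. destruct (in_pcs _ _ _ _ _ Hq') as [j' [_ ->]].
    intros x [H1 _] [H2 _]. apply (Ha b Hb x); auto.
Qed.

Lemma Ival_disj a0 h : 0 < h -> forall i j t, i <> j -> Ival a0 h i t -> Ival a0 h j t -> False.
Proof.
  intros Hh i j t Hij [H1 H2] [H3 H4].
  destruct (Nat.lt_total i j) as [H|[H|H]]; [|lia|].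
  - apply le_INR in H. rewrite S_INR in *. nra.
  - apply le_INR in H. rewrite S_INR in *. nra.
Qed.

Lemma mu_pieces mu a0 h A K : is_prob_measure mu -> 0 < h -> borel A ->
  mu (fun t => A t /\ a0 <= t < a0 + INR K * h) = sumN (fun j => mu (fun t => A t /\ Ival a0 h j t)) K.
Proof.
  intros Pm Hh HA. induction K; cbn [sumN].
  - apply mu_empty; auto. intros t [_ H]. simpl in H. lra.
  - rewrite <- IHK. rewrite <- mu_or; auto.
    + apply mu_ext. intros t. unfold Ival. rewrite S_INR.
      assert (0 <= INR K * h) by (apply Rmult_le_pos; [apply pos_INR|lra]).
      split.
      * intros [HAt Ht]. destruct (Rlt_dec t (a0 + INR K * h)); [left|right]; repeat split; auto; lra.
      * intros [[HAt Ht]|[HAt Ht]]; repeat split; auto; lra.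
    + apply borel_and; auto. apply borel_Ico.
    + apply borel_and; auto. apply borel_Ico.
    + intros t [_ H1] [_ H2]. unfold Ival in H2. lra.
Qed.

Lemma young s a b : 0 <= s <= 1 -> exp (s * a + (1 - s) * b) <= s * exp a + (1 - s) * exp b.
Proof.
  intros Hs. set (M := s * a + (1 - s) * b).
  assert (Ha : exp M * (1 + (a - M)) <= exp a).
  { replace (exp a) with (exp M * exp (a - M)) by (rewrite <- exp_plus; f_equal; ring).
    apply Rmult_le_compat_l; [left; apply exp_pos|apply exp_ineq1_le]. }
  assert (Hb : exp M * (1 + (b - M)) <= exp b).
  { replace (exp b) with (exp M * exp (b - M)) by (rewrite <- exp_plus; f_equal; ring).
    apply Rmult_le_compat_l; [left; apply exp_pos|apply exp_ineq1_le]. }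
  assert (exp M = s * (exp M * (1 + (a - M))) + (1 - s) * (exp M * (1 + (b - M)))) by (unfold M; ring).
  nra.
Qed.

Lemma young2 s P Q U V : 0 <= s <= 1 -> 0 < U -> 0 < V ->
  exp (s * P + (1 - s) * Q) <= exp (s * ln U + (1 - s) * ln V) * (s / U * exp P + (1 - s) / V * exp Q).
Proof.
  intros Hs HU HV.
  replace (s * P + (1 - s) * Q) with ((s * (P - ln U) + (1 - s) * (Q - ln V)) + (s * ln U + (1 - s) * ln V)) by ring.
  rewrite exp_plus, Rmult_comm. apply Rmult_le_compat_l; [left; apply exp_pos|].
  eapply Rle_trans; [apply young; auto|].
  unfold Rminus at 1 3. rewrite !exp_plus, !exp_Ropp, !exp_ln by auto.
  right; unfold Rdiv; ring.
Qed.

Lemma exp_le a b : a <= b -> exp a <= exp b.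
Proof. intros [H|H]; [left; apply exp_increasing; auto|subst; lra]. Qed.

Lemma lin_bound x c d h : 0 <= d <= h -> x * c - Rabs x * h <= x * (c + d) <= x * c + Rabs x * h.
Proof.
  intros Hd. pose proof (Rabs_bnd x).
  assert (- Rabs x * d <= x * d <= Rabs x * d) by nra.
  assert (Rabs x * d <= Rabs x * h) by (apply Rmult_le_compat_l; [apply Rabs_pos|lra]).
  nra.
Qed.

Lemma holder_bound mu x y s U V l a0 h K :
  is_prob_measure mu -> 0 < s < 1 -> 0 < U -> 0 < V -> 0 < h ->
  (forall L, simple_below mu (fun t => exp (x * t)) L -> simple_integral mu L <= U) ->
  (forall L, simple_below mu (fun t => exp (y * t)) L -> simple_integral mu L <= V) ->
  simple_below mu (fun t => exp ((s * x + (1 - s) * y) * t)) l ->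
  simple_integral mu l <= exp (2 * (Rabs x + Rabs y) * h) * exp (s * ln U + (1 - s) * ln V)
                          + sumL fst l * mu (fun t => ~ (a0 <= t < a0 + INR K * h)).
Proof.
  intros Pm Hs HU HV Hh BU BV Hl.
  set (I := Ival a0 h).
  set (r := exp (2 * (Rabs x + Rabs y) * h)).
  set (H := exp (s * ln U + (1 - s) * ln V)).
  set (T := fun t => ~ (a0 <= t < a0 + INR K * h)).
  set (Pj := fun j => x * (a0 + INR j * h) - Rabs x * h).
  set (Qj := fun j => y * (a0 + INR j * h) - Rabs y * h).
  set (ku := fun j => exp (Pj j)).
  set (kv := fun j => exp (Qj j)).
  assert (HIb : forall j, borel (I j)) by (intros j; unfold I, Ival; apply borel_Ico).
  assert (HId := Ival_disj a0 h Hh).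
  assert (Hpt : forall j t, I j t -> x * t >= Pj j /\ x * t <= Pj j + 2 * Rabs x * h /\
                                    y * t >= Qj j /\ y * t <= Qj j + 2 * Rabs y * h).
  { intros j t [H1 H2]. rewrite S_INR in H2.
    pose proof (lin_bound x (a0 + INR j * h) (t - (a0 + INR j * h)) h ltac:(lra)) as Lx.
    pose proof (lin_bound y (a0 + INR j * h) (t - (a0 + INR j * h)) h ltac:(lra)) as Ly.
    replace (a0 + INR j * h + (t - (a0 + INR j * h))) with t in Lx, Ly by ring.
    unfold Pj, Qj; lra. }
  apply sb_iff in Hl. destruct Hl as [Hgood HPD].
  set (LU := flat_map (fun a => pcs ku (snd a) I K) l).
  set (LV := flat_map (fun a => pcs kv (snd a) I K) l).
  assert (SU : simple_below mu (fun t => exp (x * t)) LU).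
  { apply sb_iff. split; [|apply PD_flat; auto].
    intros q Hq. apply in_flat_map in Hq. destruct Hq as [a [Ha Hq]].
    destruct (in_pcs _ _ _ _ _ Hq) as [j [_ ->]]. destruct (Hgood a Ha) as [_ [Hba _]].
    split; [left; apply exp_pos|split; [apply borel_and; auto|]].
    intros t [_ Ht]. simpl. apply exp_le. destruct (Hpt j t Ht); lra. }
  assert (SV : simple_below mu (fun t => exp (y * t)) LV).
  { apply sb_iff. split; [|apply PD_flat; auto].
    intros q Hq. apply in_flat_map in Hq. destruct Hq as [a [Ha Hq]].
    destruct (in_pcs _ _ _ _ _ Hq) as [j [_ ->]]. destruct (Hgood a Ha) as [_ [Hba _]].
    split; [left; apply exp_pos|split; [apply borel_and; auto|]].
    intros t [_ Ht]. simpl. apply exp_le. destruct (Hpt j t Ht) as [_ [_ [? _]]]; lra. }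
  pose proof (BU LU SU) as HLU. pose proof (BV LV SV) as HLV.
  unfold LU, LV in HLU, HLV. rewrite si_flat in HLU, HLV.
  assert (Hr : 0 < r) by apply exp_pos.
  assert (HH : 0 < H) by apply exp_pos.
  set (al := r * H * (s / U)). set (be := r * H * ((1 - s) / V)).
  assert (Hal : 0 <= al) by (unfold al; apply Rmult_le_pos; [nra|left; apply Rdiv_lt_0_compat; lra]).
  assert (Hbe : 0 <= be) by (unfold be; apply Rmult_le_pos; [nra|left; apply Rdiv_lt_0_compat; lra]).
  change (simple_integral mu l) with (sumL (fun a => fst a * mu (snd a)) l).
  eapply Rle_trans.
  { apply (sumL_le3 _ (fun a => simple_integral mu (pcs ku (snd a) I K))
                      (fun a => simple_integral mu (pcs kv (snd a) I K))
                      (fun a => fst a * mu T) al be).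
    intros [c A] Ha. simpl. destruct (Hgood _ Ha) as [Hc [HA Hle]]. simpl in Hc, HA, Hle.
    rewrite (mu_split mu Pm A (fun t => a0 <= t < a0 + INR K * h) HA (borel_Ico _ _)).
    rewrite (mu_pieces mu a0 h A K Pm Hh HA).
    rewrite !si_pcs.
    rewrite Rmult_plus_distr_l, <- sumN_scal.
    apply Rplus_le_compat.
    - apply sumN_le2. intros j _.
      assert (Hpc : c * mu (fun t => A t /\ Ival a0 h j t) <= (al * ku j + be * kv j) * mu (fun t => A t /\ Ival a0 h j t)).
      { apply (cmu_le mu Pm); [apply borel_and; auto; apply HIb|].
        intros t [HAt Ht]. apply Rle_trans with (exp ((s * x + (1 - s) * y) * t)); [apply Hle; auto|].
        destruct (Hpt j t Ht) as [Hx1 [Hx2 [Hy1 Hy2]]].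
        apply Rle_trans with (r * exp (s * Pj j + (1 - s) * Qj j)).
        + unfold r. rewrite <- exp_plus. apply exp_le.
          replace ((s * x + (1 - s) * y) * t) with (s * (x * t) + (1 - s) * (y * t)) by ring.
          assert (s * (x * t) <= s * (Pj j + 2 * Rabs x * h)) by (apply Rmult_le_compat_l; lra).
          assert ((1 - s) * (y * t) <= (1 - s) * (Qj j + 2 * Rabs y * h)) by (apply Rmult_le_compat_l; lra).
          assert (0 <= Rabs x * h) by (apply Rmult_le_pos; [apply Rabs_pos|lra]).
          assert (0 <= Rabs y * h) by (apply Rmult_le_pos; [apply Rabs_pos|lra]).
          assert (s * (Rabs x * h) <= Rabs x * h) by nra.
          assert ((1 - s) * (Rabs y * h) <= Rabs y * h) by nra.
          nra.
        + pose proof (young2 s (Pj j) (Qj j) U V ltac:(lra) HU HV) as Y.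
          fold H in Y. unfold al, be, ku, kv.
          apply Rle_trans with (r * (H * (s / U * exp (Pj j) + (1 - s) / V * exp (Qj j)))).
          * apply Rmult_le_compat_l; lra.
          * right; ring. }
      unfold I. lra.
    - apply Rmult_le_compat_l; auto. apply mu_mono; auto.
      + apply borel_and; auto. apply borel_compl, borel_Ico.
      + unfold T. apply borel_compl, borel_Ico.
      + intros t [_ Ht]; auto. }
  rewrite sumL_fst_scal.
  assert (al * sumL (fun a => simple_integral mu (pcs ku (snd a) I K)) l <= al * U) by (apply Rmult_le_compat_l; auto).
  assert (be * sumL (fun a => simple_integral mu (pcs kv (snd a) I K)) l <= be * V) by (apply Rmult_le_compat_l; auto).
  assert (al * U + be * V = r * H) by (unfold al, be; field; lra).
  fold T. lra.
Qed.

Lemma nat_large' X : exists n : nat, (1 <= n)%nat /\ X <= INR n.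
Proof.
  destruct (INR_unbounded (Rmax X 1)) as [n Hn].
  exists n; split.
  - destruct n; [simpl in Hn; pose proof (Rmax_r X 1); lra|lia].
  - pose proof (Rmax_l X 1); lra.
Qed.

Lemma sumL_fst_ge0 g l : (forall a, In a l -> good g a) -> 0 <= sumL fst l.
Proof.
  induction l; simpl; intros H; [lra|].
  destruct (H a (or_introl eq_refl)) as [Ha _].
  assert (0 <= sumL fst l) by (apply IHl; auto). lra.
Qed.

Lemma holder_si mu x y s U V l :
  is_prob_measure mu -> 0 < s < 1 -> 0 < U -> 0 < V ->
  (forall L, simple_below mu (fun t => exp (x * t)) L -> simple_integral mu L <= U) ->
  (forall L, simple_below mu (fun t => exp (y * t)) L -> simple_integral mu L <= V) ->
  simple_below mu (fun t => exp ((s * x + (1 - s) * y) * t)) l ->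
  simple_integral mu l <= exp (s * ln U + (1 - s) * ln V).
Proof.
  intros Pm Hs HU HV BU BV Hl.
  set (H := exp (s * ln U + (1 - s) * ln V)).
  assert (HH : 0 < H) by apply exp_pos.
  set (C := sumL fst l).
  assert (HC : 0 <= C) by (apply (sumL_fst_ge0 (fun t => exp ((s * x + (1 - s) * y) * t))); apply sb_iff in Hl; tauto).
  apply Rnot_lt_le; intros Hlt.
  set (S := simple_integral mu l) in *.
  set (eps := S - H).
  assert (Heps : 0 < eps) by (unfold eps; lra).
  destruct (tail_small mu Pm (eps / (2 * (C + 1)))) as [N HN].
  { apply Rdiv_lt_0_compat; lra. }
  set (Nr := INR N + 1).
  assert (HNr : 0 < Nr) by (unfold Nr; pose proof (pos_INR N); lra).
  set (del := eps / (2 * (H + 1))).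
  assert (Hdel : 0 < del) by (unfold del; apply Rdiv_lt_0_compat; lra).
  set (Ld := ln (1 + del)).
  assert (HLd : 0 < Ld) by (unfold Ld; rewrite <- ln_1; apply ln_increasing; lra).
  set (Ax := Rabs x + Rabs y).
  assert (HAx : 0 <= Ax) by (unfold Ax; pose proof (Rabs_pos x); pose proof (Rabs_pos y); lra).
  destruct (nat_large' (4 * Nr * Ax / Ld)) as [K [HK1 HK2]].
  assert (HKp : 0 < INR K) by (apply (lt_INR 0); lia).
  set (h := 2 * Nr / INR K).
  assert (Hh : 0 < h) by (unfold h; apply Rdiv_lt_0_compat; lra).
  pose proof (holder_bound mu x y s U V l (- Nr) h K Pm Hs HU HV Hh BU BV Hl) as HB.
  fold H S C in HB.
  assert (HKh : INR K * h = 2 * Nr) by (unfold h; field; lra).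
  rewrite HKh in HB.
  assert (HT : mu (fun t => ~ (- Nr <= t < - Nr + 2 * Nr)) <= mu (fun t => INR N <= Rabs t)).
  { apply mu_mono; auto.
    - apply borel_compl, borel_Ico.
    - apply borel_abs_ge.
    - intros t Ht. unfold Nr in *. destruct (Rle_dec (- (INR N + 1)) t).
      + assert (t >= INR N + 1) by lra. pose proof (RRle_abs t). lra.
      + assert (t < - (INR N + 1)) by lra. rewrite Rabs_left by (pose proof (pos_INR N); lra). lra. }
  assert (Hr : exp (2 * Ax * h) <= 1 + del).
  { rewrite <- (exp_ln (1 + del)) by lra. apply exp_le. fold Ld.
    assert (4 * Nr * Ax <= Ld * INR K).
    { apply Rmult_le_compat_l with (r := Ld) in HK2; [|lra].
      replace (Ld * (4 * Nr * Ax / Ld)) with (4 * Nr * Ax) in HK2 by (field; lra). lra. }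
    unfold h. apply Rmult_le_reg_r with (INR K); auto.
    replace (2 * Ax * (2 * Nr / INR K) * INR K) with (4 * Nr * Ax) by (field; lra). lra. }
  fold Ax in HB.
  assert (H1 : exp (2 * Ax * h) * H <= (1 + del) * H) by (apply Rmult_le_compat_r; lra).
  assert (H2 : C * mu (fun t => ~ (- Nr <= t < - Nr + 2 * Nr)) <= C * (eps / (2 * (C + 1)))) by (apply Rmult_le_compat_l; lra).
  assert (H3 : del * H < eps / 2).
  { unfold del. apply Rmult_lt_reg_r with (2 * (H + 1)); [lra|].
    replace (eps / (2 * (H + 1)) * H * (2 * (H + 1))) with (eps * H) by (field; lra).
    replace (eps / 2 * (2 * (H + 1))) with (eps * H + eps) by (field; lra). lra. }
  assert (H4 : C * (eps / (2 * (C + 1))) < eps / 2).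
  { apply Rmult_lt_reg_r with (2 * (C + 1)); [lra|].
    replace (C * (eps / (2 * (C + 1))) * (2 * (C + 1))) with (C * eps) by (field; lra).
    replace (eps / 2 * (2 * (C + 1))) with (C * eps + eps) by (field; lra). lra. }
  unfold eps in *. lra.
Qed.

Lemma ln_le' a b : 0 < a -> a <= b -> ln a <= ln b.
Proof. intros Ha [Hab | ->]; [left; apply ln_increasing; auto | lra]. Qed.

Lemma XM_bound g nu : X_M g -> is_prob_measure nu -> (forall t, g t <> PInf -> g t = mgf nu t) ->
  forall x U, g x = Fin U -> forall L, simple_below nu (fun t => exp (x * t)) L -> simple_integral nu L <= U.
Proof.
  intros _ Pnu Hm x U Hx L HL. pose proof (int_ge nu _ L HL) as H.
  rewrite (Hm x) in Hx by (rewrite Hx; discriminate). unfold mgf in Hx. rewrite Hx in H. simpl in H; auto.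
Qed.

Lemma logconv g : X_M g -> forall x y s U V, 0 < s < 1 -> g x = Fin U -> g y = Fin V ->
  exists W, g (s * x + (1 - s) * y) = Fin W /\ 0 < W /\ ln W <= s * ln U + (1 - s) * ln V.
Proof.
  intros HX x y s U V Hs Hx Hy.
  destruct HX as [Hval [H0 [Hlsc [Hconv [nu [Pnu Hm]]]]]].
  assert (HX : X_M g) by (repeat split; eauto).
  assert (HU : 0 < U) by (destruct (Hval x) as [[r [Hr Hr0]]|Hr]; rewrite Hx in Hr; [inversion Hr; subst; auto|discriminate]).
  assert (HV : 0 < V) by (destruct (Hval y) as [[r [Hr Hr0]]|Hr]; rewrite Hy in Hr; [inversion Hr; subst; auto|discriminate]).
  pose proof (Hconv x y s U V ltac:(lra) Hx Hy) as Hc.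
  destruct (Hval (s * x + (1 - s) * y)) as [[W [HW HW0]]|HW]; [|rewrite HW in Hc; simpl in Hc; tauto].
  exists W; split; auto; split; auto.
  assert (Hmz := Hm (s * x + (1 - s) * y) ltac:(rewrite HW; discriminate)).
  assert (Hle : Rbar_le (mgf nu (s * x + (1 - s) * y)) (Fin (exp (s * ln U + (1 - s) * ln V)))).
  { unfold mgf. apply int_le. intros l Hl.
    apply (holder_si nu x y s U V l Pnu Hs HU HV); auto.
    - apply (XM_bound g nu HX Pnu Hm x U Hx).
    - apply (XM_bound g nu HX Pnu Hm y V Hy). }
  rewrite <- Hmz, HW in Hle. simpl in Hle.
  rewrite <- (ln_exp (s * ln U + (1 - s) * ln V)). apply ln_le'; auto.
Qed.

Lemma XL_nice f : X_Lambda f -> nice f.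
Proof.
  intros [g [HX Hf]].
  pose proof HX as [Hval [H0 [Hlsc [Hconv [nu [Pnu Hm]]]]]].
  assert (Hg0 : g 0 = Fin 1) by (rewrite Hm by auto; apply mgf0; auto).
  assert (Hfv : forall t, (exists a, f t = Fin a /\ g t = Fin (exp a)) \/ (f t = PInf /\ g t = PInf)).
  { intros t. rewrite Hf. destruct (Hval t) as [[r [-> Hr]] | ->]; simpl; [left|right; auto].
    exists (ln r); rewrite exp_ln; auto. }
  split; [|split].
  - intros t. destruct (Hfv t) as [[a [-> _]]|[-> _]]; [left; eauto|right; auto].
  - rewrite Hf, Hg0. simpl. rewrite ln_1; auto.
  - intros t u Ht Htu Hu. rewrite !Jmap_nz by lra.
    destruct (Hfv t) as [[a [Hft Hgt]]|[Hft _]].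
    2:{ rewrite Hft. simpl. destruct (Rlt_dec 0 t); [lra|]. simpl; auto. }
    rewrite Hft.
    destruct (Rlt_dec u 0) as [Hneg|Hpos].
    + set (s := u / t).
      assert (Hs : 0 < s < 1).
      { unfold s. replace (u / t) with ((- u) / (- t)) by (field; lra). split.
        - apply Rdiv_lt_0_compat; lra.
        - apply Rmult_lt_reg_r with (- t); [lra|].
          replace (- u / - t * - t) with (- u) by (field; lra). lra. }
      destruct (logconv g HX t 0 s (exp a) 1 Hs Hgt Hg0) as [W [HW [HW0 Hln]]].
      replace (s * t + (1 - s) * 0) with u in HW by (unfold s; field; lra).
      rewrite ln_exp, ln_1 in Hln.
      rewrite Hf, HW. simpl.
      assert (Hc : ln W <= u * (a / t)) by (replace (u * (a / t)) with (s * a) by (unfold s; field; lra); lra).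
      assert (/ u * (u * (a / t)) <= / u * ln W).
      { apply Rmult_le_compat_neg_l; [left; apply Rinv_lt_0_compat; auto|auto]. }
      replace (/ u * (u * (a / t))) with (a / t) in H by (field; lra).
      unfold Rdiv at 2. rewrite Rmult_comm. auto.
    + assert (Hup : 0 < u) by lra.
      destruct (Hfv u) as [[b [Hfu Hgu]]|[Hfu _]].
      2:{ rewrite Hfu. simpl. destruct (Rlt_dec 0 u); [simpl; auto|lra]. }
      rewrite Hfu. simpl.
      set (s := u / (u - t)).
      assert (Hs : 0 < s < 1).
      { unfold s; split.
        - apply Rdiv_lt_0_compat; lra.
        - apply Rmult_lt_reg_r with (u - t); [lra|]. field_simplify; lra. }
      destruct (logconv g HX t u s (exp a) (exp b) Hs Hgt Hgu) as [W [HW [HW0 Hln]]].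
      replace (s * t + (1 - s) * u) with 0 in HW by (unfold s; field; lra).
      rewrite Hg0 in HW. inversion HW; subst W.
      rewrite !ln_exp, ln_1 in Hln.
      assert (Hk : 0 <= u * a - t * b).
      { assert (0 <= (s * a + (1 - s) * b) * (u - t)) by (apply Rmult_le_pos; lra).
        replace ((s * a + (1 - s) * b) * (u - t)) with (u * a - t * b) in H by (unfold s; field; lra). auto. }
      set (p := a / t). set (q := b / u).
      assert (Ha : a = p * t) by (unfold p; field; lra).
      assert (Hb : b = q * u) by (unfold q; field; lra).
      rewrite Ha, Hb in Hk.
      assert (t * u < 0) by nra.
      assert (0 <= (t * u) * (p - q)) by nra.
      nra.
Qed.


Theorem mainTheorem11 :
  forall f : R -> Rbar, X_Lambda f ->
  forall k : nat, (1 <= k)%nat ->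
  exists m : nat, (1 <= m)%nat /\
    forall g : R -> Rbar, X_Lambda g ->
      inV m (epi f) (epi g) ->
      inV k (closure2 (epi (Jmap f))) (closure2 (epi (Jmap g))).
Proof.
  exact (assembly X_Lambda XL_nice).
Qed.

Print Assumptions mainTheorem11.
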